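(* Let $G=(V,E)$ be a doubly stochasticable strongly connected digraph. Then $\max\{\max_{v\in V}d_{\mathrm{out}}(v),\max_{v\in V}d_{\mathrm{in}}(v)\}\leq\operatorname{ds}(G)\leq|E|-|V|+1.$
   Context: A digraph $G=(V,E)$, $V=\{v_1,\dots,v_n\}$, $E\subseteq V\times V$ (self-loops allowed); $d_{\mathrm{out}}(v)$ and $d_{\mathrm{in}}(v)$ are the numbers of out-neighbors and in-neighbors of $v$. Strongly connected means a directed path exists between every ordered pair of distinct vertices. $G$ is doubly stochasticable if it admits $A\in\mathbb{R}^{n\times n}_{\geq0}$ with $a_{ij}>0$ iff $(v_i,v_j)\in E$ and all row and column sums equal $1$. A cycle is a directed path $v_{i_1},\dots,v_{i_k},v_{i_1}$ with distinct $v_{i_1},\dots,v_{i_k}$ (self-loops are cycles), viewed as a subdigraph; $\mathcal{C}(G)$ is the set of subdigraphs that are a single edgeless vertex, a cycle, or a union of pairwise vertex-disjoint cycles; a family generates $G$ if the union of vertex sets is $V$ and of edge sets is $E$. The DS-character $\operatorname{ds}(G)$ is the minimum cardinality of a subset of $\mathcal{C}(G)$ generating $G$ all of whose elements contain every vertex of $G$. *)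

(* Defs.v *)
From HB Require Import structures.
From mathcomp Require Import all_boot all_order all_algebra.
From mathcomp Require Import reals.
Set Implicit Arguments. Unset Strict Implicit. Unset Printing Implicit Defensive.
Import Order.TTheory GRing.Theory Num.Theory.

(* A digraph G = (V, E): vertices are the elements of a finite type V,
   edges a set E of ordered pairs (self-loops allowed). *)

Definition d_out (V : finType) (E : {set V * V}) (v : V) : nat :=
  #|[set w | (v, w) \in E]|.
Definition d_in (V : finType) (E : {set V * V}) (v : V) : nat :=
  #|[set w | (w, v) \in E]|.

Definition edge_rel (V : finType) (E : {set V * V}) : rel V :=
  fun x y => (x, y) \in E.

Definition strongly_connected (V : finType) (E : {set V * V}) : Prop :=
  forall u v : V, u != v -> connect (edge_rel E) u v.

Definition ds_able (R : realType) (V : finType) (E : {set V * V}) : Prop :=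
  exists A : V -> V -> R,
    [/\ forall i j, 0 <= A i j,
        forall i j, (0 < A i j) <-> ((i, j) \in E),
        forall i, \sum_(j : V) A i j = 1
      & forall j, \sum_(i : V) A i j = 1]%R.

Definition subdigraph (V : finType) := ({set V} * {set V * V})%type.

(* The cycle v_{i_1}, ..., v_{i_k}, v_{i_1} given by a duplicate-free nonempty
   sequence s, viewed as subdigraph: vertices of s, edges (x, next s x). *)
Definition cycle_of (V : finType) (s : seq V) : subdigraph V :=
  ([set x in s], [set (x, next s x) | x in s]).

Definition is_cycle_seq (V : finType) (E : {set V * V}) (s : seq V) : bool :=
  [&& s != [::], uniq s & (cycle_of s).2 \subset E].

(* C(G): a single edgeless vertex, or a union of (one or more) pairwise
   vertex-disjoint cycles of G. *)
Definition in_CG (V : finType) (E : {set V * V}) (H : subdigraph V) : Prop :=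
  (exists v : V, H = ([set v], set0))
  \/ (exists ss : seq (seq V),
        [/\ ss != [::],
            all (is_cycle_seq E) ss,
            (forall i j, (i < size ss)%N -> (j < size ss)%N -> i != j ->
               [disjoint [set x in nth [::] ss i] & [set x in nth [::] ss j]])
          & H = (\bigcup_(s <- ss) (cycle_of s).1,
                 \bigcup_(s <- ss) (cycle_of s).2)]).

Definition ds_family (V : finType) (E : {set V * V})
    (S : {set subdigraph V}) : Prop :=
  [/\ forall H, H \in S -> in_CG E H,
      forall H, H \in S -> H.1 = [set: V],
      \bigcup_(H in S) H.1 = [set: V]
    & \bigcup_(H in S) H.2 = E].

Definition is_ds (V : finType) (E : {set V * V}) (k : nat) : Prop :=
  (exists S, ds_family E S /\ #|S| = k)
  /\ (forall S, ds_family E S -> (k <= #|S|)%N).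

(* Main.v *)
Require Import Defs.
From HB Require Import structures.
From mathcomp Require Import all_boot all_order all_algebra.
From mathcomp Require Import reals.
From mathcomp Require Import zify lra.
From Stdlib Require Import Classical.
Set Implicit Arguments. Unset Strict Implicit. Unset Printing Implicit Defensive.
Import Order.TTheory GRing.Theory Num.Theory.
Section Hall.
Variables (T U : finType) (r : T -> U -> bool) (u0 : U).
Definition nbh (X : {set T}) : {set U} := [set y | [exists x in X, r x y]].

Lemma nbhU X Y : nbh (X :|: Y) = nbh X :|: nbh Y.
Proof.
apply/setP=> y; rewrite !inE; apply/existsP/orP.
  by case=> x /andP[]; rewrite inE => /orP[] hx hr; [left|right]; apply/existsP; exists x; rewrite hx.
by case=> /existsP[x /andP[hx hr]]; exists x; rewrite inE hx ?orbT.
Qed.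

Lemma nbh_mem x y (X : {set T}) : x \in X -> r x y -> y \in nbh X.
Proof. by move=> hx hr; rewrite inE; apply/existsP; exists x; rewrite hx. Qed.

Lemma hall n : forall (A : {set T}) (B : {set U}), #|A| <= n ->
  (forall X : {set T}, X \subset A -> #|X| <= #|nbh X :&: B|) ->
  exists f : T -> U, {in A &, injective f} /\
    (forall x, x \in A -> f x \in B /\ r x (f x)).
Proof.
elim: n => [|n IH] A B hA hH.
  exists (fun _ => u0); have -> : A = set0 by apply/eqP; rewrite -cards_eq0; lia.
  by split=> [x|x]; rewrite inE.
case: (leqP #|A| n) => hAn; first exact: IH.
case: (boolP [exists X : {set T}, [&& X \proper A, X != set0 & #|nbh X :&: B| <= #|X|]]).
- case/existsP => X /and3P [pXA X0 tight].
  have sXA := proper_sub pXA.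
  have [f1 [inj1 h1]] : exists f : T -> U, {in X &, injective f} /\
      (forall x, x \in X -> f x \in B /\ r x (f x)).
    apply: IH; first by have := proper_card pXA; lia.
    by move=> Y sYX; apply: hH; apply: subset_trans sXA.
  have [f2 [inj2 h2]] : exists f : T -> U, {in A :\: X &, injective f} /\
      (forall x, x \in A :\: X -> f x \in B :\: nbh X /\ r x (f x)).
    apply: IH.
      rewrite cardsDS //. have : 0 < #|X| by rewrite card_gt0. lia.
    move=> Y sY.
    have sYA : Y \subset A by apply: subset_trans sY (subsetDl _ _).
    have dYX : Y :&: X = set0.
      apply/setP=> x; rewrite !inE; apply/andP=> -[hy hx].
      by have := subsetP sY x hy; rewrite !inE hx.
    have := hH (Y :|: X); rewrite subUset sYA sXA => /(_ isT).
    rewrite cardsU dYX cards0 subn0 nbhU.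
    have hsub : (nbh Y :|: nbh X) :&: B \subset (nbh Y :&: (B :\: nbh X)) :|: (nbh X :&: B).
      by apply/subsetP=> y; rewrite !inE; case: [exists x in Y, r x y]; case: [exists x in X, r x y]; case: (y \in B).
    have := subset_leq_card hsub; rewrite cardsU. lia.
  exists (fun x => if x \in X then f1 x else f2 x); split.
    move=> x y hx hy /=.
    case hxX: (x \in X); case hyX: (y \in X).
    + by apply: inj1.
    + move=> e; have [hb _] : _ := h2 y ltac:(by rewrite inE hyX hy).
      have [_ hr] := h1 x hxX.
      by move: hb; rewrite -e inE (nbh_mem hxX hr).
    + move=> e; have [hb _] : _ := h2 x ltac:(by rewrite inE hxX hx).
      have [_ hr] := h1 y hyX.
      by move: hb; rewrite e inE (nbh_mem hyX hr).
    + by apply: inj2; rewrite inE ?hxX ?hyX.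
  move=> x hx; case hxX: (x \in X); first exact: h1.
  have [hb hr] : _ := h2 x ltac:(by rewrite inE hxX hx).
  by move: hb; rewrite inE => /andP[].
- move=> /existsPn hno.
  have : 0 < #|A| by lia.
  rewrite card_gt0 => /set0Pn [a ha].
  have : 0 < #|nbh [set a] :&: B|.
    have := hH [set a]; rewrite sub1set ha cards1 => /(_ isT). lia.
  rewrite card_gt0 => /set0Pn [b]; rewrite !inE => /andP[/existsP[a' /andP[]]].
  rewrite inE => /eqP -> hab hb.
  have [f [injf hf]] : exists f : T -> U, {in A :\ a &, injective f} /\
      (forall x, x \in A :\ a -> f x \in B :\ b /\ r x (f x)).
    apply: IH; first by move: hA; rewrite (cardsD1 a A) ha; lia.
    move=> Y sY.
    have [->|Y0] := eqVneq Y set0; first by rewrite cards0.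
    have pYA : Y \proper A.
      rewrite properEneq; apply/andP; split.
        apply/eqP=> eYA; move: sY; rewrite eYA => /subsetP /(_ a ha).
        by rewrite !inE eqxx.
      by apply: subset_trans sY (subsetDl _ _).
    have := hno Y; rewrite pYA Y0 /= -ltnNge => hlt.
    have hsub : nbh Y :&: B \subset (nbh Y :&: (B :\ b)) :|: [set b].
      by apply/subsetP=> y; rewrite !inE; case: (y == b); case: (y \in B); case: [exists x in Y, r x y].
    have := subset_leq_card hsub; rewrite cardsU cards1. lia.
  exists (fun x => if x == a then b else f x); split.
    move=> x y hx hy /=.
    case: (eqVneq x a) => [->|hxa]; case: (eqVneq y a) => [->|hya] //.
    + move=> e; have [hb' _] : _ := hf y ltac:(by rewrite !inE hya hy).
      by move: hb'; rewrite -e !inE eqxx.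
    + move=> e; have [hb' _] : _ := hf x ltac:(by rewrite !inE hxa hx).
      by move: hb'; rewrite e !inE eqxx.
    + by apply: injf; rewrite !inE ?hxa ?hya.
  move=> x hx; case: (eqVneq x a) => [->|hxa]; first by [].
  have [hb' hr] : _ := hf x ltac:(by rewrite !inE hxa hx).
  by move: hb'; rewrite !inE => /andP[].
Qed.
End Hall.
Section DS.
Variable R : realDomainType.
Local Open Scope ring_scope.

Lemma ds_perm (V : finType) (A : V -> V -> R) (c : R) :
  (forall i j, 0 <= A i j) -> (forall i, \sum_j A i j = c) ->
  (forall j, \sum_i A i j = c) -> 0 < c ->
  exists f : V -> V, injective f /\ forall x, 0 < A x (f x).
Proof.
move=> A0 rs cs c0.
case: (pickP (@predT V)) => [u0 _|hV]; last first.
  by exists id; split => [//|x]; have := hV x.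
have [|f [injf hf]] := @hall V V (fun x y => 0 < A x y) u0 #|V| setT setT (max_card _).
  move=> X _; rewrite setIT.
  set N := nbh _ X.
  have key : c * #|X|%:R <= c * #|N|%:R.
    have e1 : \sum_(i in X) \sum_j A i j = c * #|X|%:R.
      by rewrite (eq_bigr (fun _ => c)) // sumr_const mulr_natr.
    have e2 : \sum_(j in N) \sum_i A i j = c * #|N|%:R.
      by rewrite (eq_bigr (fun _ => c)) // sumr_const mulr_natr.
    rewrite -e1 -e2.
    have e3 : forall i, i \in X -> \sum_j A i j = \sum_(j in N) A i j.
      move=> i hi; rewrite (bigID (fun j => j \in N)) /= addrC big1 ?add0r // => j hj.
      apply/eqP; rewrite eq_le A0 andbT leNgt; apply: contra hj => hp.
      exact: (nbh_mem hi hp).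
    rewrite (eq_bigr _ e3) exchange_big /=.
    apply: ler_sum => j _.
    by rewrite [X in _ <= X](bigID (fun i => i \in X)) /= lerDl sumr_ge0.
  by rewrite -(ler_nat R) -(ler_pM2l c0).
exists f; split; first by move=> x y; apply: injf; rewrite inE.
by move=> x; have [_ ?] := hf x (in_setT x).
Qed.

Lemma edge_perm (V : finType) n : forall (A : V -> V -> R) (c : R),
  (#|[set p : V * V | (0 < A p.1 p.2)%R]| <= n)%N ->
  (forall i j, 0 <= A i j) -> (forall i, \sum_j A i j = c) ->
  (forall j, \sum_i A i j = c) -> forall i j, 0 < A i j ->
  exists f : V -> V, [/\ injective f, f i = j & forall x, 0 < A x (f x)].
Proof.
elim: n => [|n IH] A c hn A0 rs cs i j hij.
  by move: hn; rewrite leqn0 cards_eq0 => /eqP/setP/(_ (i, j)); rewrite !inE hij.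
have c0 : 0 < c.
  rewrite -(rs i) (bigD1 j) //=; apply: (lt_le_trans hij); rewrite lerDl sumr_ge0 //.
have [s [injs hs]] := ds_perm A0 rs cs c0.
case: (eqVneq (s i) j) => [e|ne]; first by exists s.
pose x0 := [arg min_(x < i) A x (s x)]%O.
have hmin : forall x, A x0 (s x0) <= A x (s x).
  by rewrite /x0; case: arg_minP => // y _ hy x; exact: hy.
set m := A x0 (s x0).
have m0 : 0 < m by apply: hs.
pose B x y := A x y - (if s x == y then m else 0).
have B0 : forall x y, 0 <= B x y.
  move=> x y; rewrite /B; case: eqP => [<-|_]; first by rewrite subr_ge0 hmin.
  by rewrite subr0.
have [sinv sK sKV] := injF_bij injs.
have sumr1 : forall x, \sum_y (if s x == y then m else 0) = m.
  move=> x; rewrite (bigD1 (s x)) //= eqxx big1 ?addr0 // => y hy.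
  by rewrite eq_sym (negbTE hy).
have sumc1 : forall y, \sum_x (if s x == y then m else 0) = m.
  move=> y; rewrite (bigD1 (sinv y)) //= sKV eqxx big1 ?addr0 // => x hx.
  case: eqP => // e; by rewrite -e sK eqxx in hx.
have rsB : forall x, \sum_y B x y = c - m by move=> x; rewrite sumrB rs sumr1.
have csB : forall y, \sum_x B x y = c - m by move=> y; rewrite sumrB cs sumc1.
have BA : forall x y, B x y <= A x y.
  move=> x y; rewrite /B; case: eqP => _; lra.
have hsub : [set p : V * V | 0 < B p.1 p.2] \proper [set p : V * V | 0 < A p.1 p.2].
  apply/properP; split.
    by apply/subsetP => -[x y]; rewrite !inE /= => hb; apply: (lt_le_trans hb).
  by exists (x0, s x0); rewrite !inE /= ?hs // /B eqxx subrr ltxx.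
have [||t [injt ti ht]] := IH B (c - m) _ B0 rsB csB i j.
- by have := proper_card hsub; lia.
- by rewrite /B (negbTE ne) subr0.
exists t; split => // x; exact: (lt_le_trans (ht x)).
Qed.
End DS.
Lemma in_bigcup_seq (T : finType) (I : eqType) (r : seq I) (F : I -> {set T}) x :
  x \in \bigcup_(i <- r) F i <-> exists2 i, i \in r & x \in F i.
Proof.
elim: r => [|a r IH]; first by rewrite big_nil inE; split => // -[].
rewrite big_cons inE; split.
  case/orP => [h|/IH [i hi hx]]; first by exists a; rewrite ?inE ?eqxx.
  by exists i; rewrite // inE hi orbT.
case=> i; rewrite inE => /orP [/eqP ->|hi] hx; first by rewrite hx.
by apply/orP; right; apply/IH; exists i.
Qed.

Section CG.
Variables (V : finType) (E : {set V * V}).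

Lemma CG_same (ss : seq (seq V)) :
  (forall i j, (i < size ss)%N -> (j < size ss)%N -> i != j ->
     [disjoint [set x in nth [::] ss i] & [set x in nth [::] ss j]]) ->
  forall s1 s2 x, s1 \in ss -> s2 \in ss -> x \in s1 -> x \in s2 -> s1 = s2.
Proof.
move=> hdis s1 s2 x h1 h2 x1 x2; apply/eqP; apply/negPn/negP => ne.
have := hdis (index s1 ss) (index s2 ss); rewrite !index_mem h1 h2 => /(_ isT isT).
rewrite (nth_index _ h1) (nth_index _ h2).
have -> : index s1 ss != index s2 ss.
  apply: contra ne => /eqP e; by rewrite -(nth_index [::] h1) e nth_index.
move=> /(_ isT) /disjointFr hd.
by have := hd x; rewrite !inE x1 x2 => /(_ isT).
Qed.

Lemma CG_sub H : in_CG E H -> H.2 \subset E.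
Proof.
case=> [[v ->]|[ss [_ hall _ ->]]]; first by apply/subsetP => e; rewrite inE.
apply/subsetP => e /in_bigcup_seq [s hs he].
by have /and3P [_ _ /subsetP] := allP hall s hs; apply.
Qed.

Lemma CG_out H v w w' : in_CG E H -> (v, w) \in H.2 -> (v, w') \in H.2 -> w = w'.
Proof.
case=> [[u ->]|[ss [_ hall hdis ->]]]; first by rewrite inE.
move=> /in_bigcup_seq [s1 hs1 /imsetP [x1 hx1 [e1 e1']]].
move=> /in_bigcup_seq [s2 hs2 /imsetP [x2 hx2 [e2 e2']]].
rewrite e1 in e2; subst w w' x2.
by rewrite (CG_same hdis hs1 hs2 hx1 hx2).
Qed.

Lemma CG_in H v w w' : in_CG E H -> (w, v) \in H.2 -> (w', v) \in H.2 -> w = w'.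
Proof.
case=> [[u ->]|[ss [_ hall hdis ->]]]; first by rewrite inE.
move=> /in_bigcup_seq [s1 hs1 /imsetP [x1 hx1 [e1 e1']]].
move=> /in_bigcup_seq [s2 hs2 /imsetP [x2 hx2 [e2 e2']]].
subst w w'.
have hv1 : v \in s1 by rewrite e1' mem_next.
have hv2 : v \in s2 by rewrite e2' mem_next.
have es := CG_same hdis hs1 hs2 hv1 hv2; subst s2.
have /and3P [_ us _] := allP hall s1 hs1.
by rewrite -(prev_next us x1) -e1' e2' prev_next.
Qed.

Definition pdg (f : V -> V) : subdigraph V := ([set: V], [set (x, f x) | x : V]).

Lemma pdg_CG (f : V -> V) (v0 : V) : injective f -> (forall x, (x, f x) \in E) ->
  in_CG E (pdg f).
Proof.
move=> injf hE; right.
set rs := enum (froots f).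
have symf : connect_sym (frel f) := fconnect_sym injf.
have nextf : forall x y, y \in orbit f x -> next (orbit f x) y = f y.
  move=> x y hy.
  have cyc : fcycle f (orbit f x) by apply/injectivePcycle => a b _ _; apply: injf.
  by have /= /eqP <- := next_cycle cyc hy.
have inroot : forall x, x \in orbit f (froot f x).
  by move=> x; rewrite -fconnect_orbit symf connect_root.
have rootin : forall x, froot f x \in rs by move=> x; rewrite mem_enum; exact: (roots_root symf x).
exists [seq orbit f x | x <- rs]; split.
- apply/eqP => e; have := map_f (orbit f) (rootin v0); by rewrite e.
- apply/allP => s /mapP [x hx ->]; rewrite /is_cycle_seq orbit_uniq /=.
  apply/andP; split.
    by apply/eqP=> e; have := in_orbit f x; rewrite e.
  apply/subsetP => e /imsetP [y hy ->]; by rewrite nextf // hE.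
- move=> i j; rewrite size_map => hi hj ne; rewrite !(nth_map v0) //.
  rewrite -setI_eq0; apply/eqP/setP => y; rewrite !inE.
  apply/negP => /andP [y1 y2].
  have ri := mem_nth v0 hi; have rj := mem_nth v0 hj.
  rewrite mem_enum in ri; rewrite mem_enum in rj.
  rewrite -fconnect_orbit in y1; rewrite -fconnect_orbit symf in y2.
  have c := connect_trans y1 y2.
  move: c; rewrite -(root_connect symf) (eqP ri) (eqP rj) nth_uniq ?enum_uniq //.
  by rewrite (negbTE ne).
- rewrite /pdg; congr pair.
    apply/setP => x; rewrite inE; symmetry; apply/in_bigcup_seq.
    by exists (orbit f (froot f x)); rewrite ?map_f // inE.
  apply/setP => e; apply/idP/idP.
    move=> /imsetP [x _ ->]; apply/in_bigcup_seq.
    exists (orbit f (froot f x)); first by rewrite map_f.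
    by rewrite /= -(nextf _ _ (inroot x)); apply: imset_f.
  move=> /in_bigcup_seq [s /mapP [r hr ->] /imsetP [y hy ->]].
  by rewrite nextf //; apply: imset_f.
Qed.
End CG.
Lemma min_nat (P : nat -> Prop) n : forall m, (m <= n)%N -> P m ->
  exists k, P k /\ forall m', P m' -> (k <= m')%N.
Proof.
elim: n => [|n IH] m hm hP.
  exists m; split => // m' _; lia.
case: (classic (exists m', (m' < m)%N /\ P m')) => [[m' [lt hp]]|hno].
  by apply: (IH m') => //; lia.
exists m; split => // m' h; rewrite leqNgt; apply/negP => lt; apply: hno; by exists m'.
Qed.

Lemma deg_out (V : finType) (E : {set V * V}) S v : ds_family E S -> (d_out E v <= #|S|)%N.
Proof.
case=> hCG _ _ hU.
pose h w : subdigraph V := odflt (set0, set0) [pick H in S | (v, w) \in H.2].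
have hh : forall w, (v, w) \in E -> h w \in S /\ (v, w) \in (h w).2.
  move=> w; rewrite -hU => /bigcupP [H hS hH]; rewrite /h.
  case: pickP => [H' /andP [a b] | hn]; first by split. by have := hn H; rewrite /= hS hH.
rewrite /d_out -(card_in_imset (f := h)).
  by apply: subset_leq_card; apply/subsetP => y /imsetP [w]; rewrite inE => hw ->; exact: (hh w hw).1.
move=> w w'; rewrite !inE => /hh [hS hw] /hh [hS' hw'] e.
rewrite e in hw; exact: CG_out (hCG _ hS') hw hw'.
Qed.

Lemma deg_in (V : finType) (E : {set V * V}) S v : ds_family E S -> (d_in E v <= #|S|)%N.
Proof.
case=> hCG _ _ hU.
pose h w : subdigraph V := odflt (set0, set0) [pick H in S | (w, v) \in H.2].
have hh : forall w, (w, v) \in E -> h w \in S /\ (w, v) \in (h w).2.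
  move=> w; rewrite -hU => /bigcupP [H hS hH]; rewrite /h.
  case: pickP => [H' /andP [a b] | hn]; first by split. by have := hn H; rewrite /= hS hH.
rewrite /d_in -(card_in_imset (f := h)).
  by apply: subset_leq_card; apply/subsetP => y /imsetP [w]; rewrite inE => hw ->; exact: (hh w hw).1.
move=> w w'; rewrite !inE => /hh [hS hw] /hh [hS' hw'] e.
rewrite e in hw; exact: CG_in (hCG _ hS') hw hw'.
Qed.

Section Greedy.
Variables (V : finType) (E : {set V * V}) (v0 : V) (f0 : V -> V).
Hypothesis injf0 : injective f0.
Hypothesis hf0 : forall x, (x, f0 x) \in E.
Hypothesis hperm : forall i j, (i, j) \in E ->
  exists f : V -> V, [/\ injective f, f i = j & forall x, (x, f x) \in E].

Definition US (S : {set subdigraph V}) := \bigcup_(H in S) H.2.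

Lemma greedy t : exists S : {set subdigraph V},
  [/\ (forall H, H \in S -> in_CG E H /\ H.1 = setT), S != set0,
      (#|S| + #|V| <= #|US S| + 1)%N & (US S = E \/ (t <= #|US S|)%N)].
Proof.
elim: t => [|t [S [hS S0 hc hU]]].
  exists [set pdg f0]; split.
  - by move=> H; rewrite inE => /eqP ->; split => //; exact: pdg_CG.
  - by apply/set0Pn; exists (pdg f0); rewrite inE.
  - rewrite cards1 /US big_set1 /pdg /= card_imset; last by move=> x y [].
    by rewrite addnC.
  - by right.
have USE : US S \subset E.
  by apply/subsetP => e /bigcupP [H hH he]; have := CG_sub (hS H hH).1; move/subsetP; apply.
case: (eqVneq (US S) E) => [e|ne]; first by exists S; split => //; left.
have : ~~ (E \subset US S) by apply: contra ne => h; rewrite eqEsubset USE h.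
case/subsetPn => -[i j] hE hnU.
have [f [injf fi hf]] := hperm hE.
have hin : (i, j) \in (pdg f).2 by rewrite /pdg /= -fi; apply: imset_f.
have notS : pdg f \notin S.
  by apply: contra hnU => hS'; apply/bigcupP; exists (pdg f).
exists (pdg f |: S); split.
- move=> H; rewrite in_setU1 => /orP [/eqP ->|]; last exact: hS.
  by split => //; exact: pdg_CG.
- by apply/set0Pn; exists (pdg f); rewrite in_setU1 eqxx.
- rewrite cardsU1 notS /US big_setU1 //=.
  have hs : (i, j) |: US S \subset (pdg f).2 :|: US S.
    by apply/subsetP => e; rewrite !inE => /orP [/eqP ->|->]; rewrite ?hin ?orbT.
  have := subset_leq_card hs; rewrite cardsU1 hnU /US /pdg /=; move: hc; rewrite /US. move=> h1 h2; apply: leq_trans (leq_add h2 (leqnn 1)); rewrite -addnA leq_add2l; exact: h1.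
- right; rewrite /US big_setU1 //=.
  have hs : (i, j) |: US S \subset (pdg f).2 :|: US S.
    by apply/subsetP => e; rewrite !inE => /orP [/eqP ->|->]; rewrite ?hin ?orbT.
  have := subset_leq_card hs; rewrite cardsU1 hnU /US.
  case: hU => [e|ht h]; first by rewrite e in ne; rewrite eqxx in ne.
  by apply: leq_trans h; exact: ht.
Qed.

Lemma family_small : exists S, ds_family E S /\ (#|S| + #|V| <= #|E| + 1)%N.
Proof.
have [S [hS S0 hc hU]] := greedy #|E|.+1.
have USE : US S \subset E.
  by apply/subsetP => e /bigcupP [H hH he]; have := CG_sub (hS H hH).1; move/subsetP; apply.
have eU : US S = E.
  case: hU => // h; have := subset_leq_card USE; lia.
exists S; split; last by rewrite -eU.
split.
- by move=> H /hS [].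
- by move=> H /hS [].
- case/set0Pn: S0 => H0 h0; apply/setP => x; rewrite inE; apply/bigcupP; exists H0 => //.
  by rewrite (hS _ h0).2 inE.
- exact: eU.
Qed.
End Greedy.

Lemma perm_of_ds (R : realType) (V : finType) (E : {set V * V}) : ds_able R E ->
  forall i j, (i, j) \in E ->
  exists f : V -> V, [/\ injective f, f i = j & forall x, (x, f x) \in E].
Proof.
case=> A [A0 Apos rs cs] i j hij.
have [f [injf fi hf]] := @edge_perm R V _ A 1 (leqnn _) A0 rs cs i j (proj2 (Apos i j) hij).
by exists f; split => // x; exact: (proj1 (Apos x (f x)) (hf x)).
Qed.

Theorem lemma3p14 (R : realType) (V : finType) (E : {set V * V}) :
  ds_able R E -> strongly_connected E ->
  exists k : nat,
    [/\ is_ds E k,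
        (maxn (\max_(v : V) d_out E v) (\max_(v : V) d_in E v) <= k)%N
      & (k <= #|E| + 1 - #|V|)%N].
Proof.
move=> hds _.
have [S0 [hS0 hc0]] : exists S, ds_family E S /\ (#|S| + #|V| <= #|E| + 1)%N.
  case: (pickP (@predT V)) => [v0 _|hV].
    case: (hds) => A [A0 Apos rs cs].
    have [f0 [injf0 hf0]] := @ds_perm R V A 1 A0 rs cs ltr01.
    apply: (@family_small V E v0 f0 injf0) => [x|]; first exact: (proj1 (Apos x (f0 x)) (hf0 x)).
    exact: perm_of_ds hds.
  exists set0; split; last by rewrite cards0 (eq_card0 hV).
  split.
  - by move=> H; rewrite inE.
  - by move=> H; rewrite inE.
  - by rewrite big_set0; apply/setP => x; have := hV x.
  - by rewrite big_set0; apply/setP => -[x y]; have := hV x.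
have [k [[S [hS eS]] hmin]] := @min_nat (fun k => exists S, ds_family E S /\ #|S| = k) #|S0| #|S0| (leqnn _) (ex_intro _ S0 (conj hS0 erefl)).
exists k; split.
- split; first by exists S.
  by move=> S' h; apply: hmin; exists S'.
- rewrite geq_max; apply/andP; split; apply/bigmax_leqP => v _; rewrite -eS.
    exact: deg_out.
  exact: deg_in.
- have := hmin _ (ex_intro _ S0 (conj hS0 erefl)); lia.
Qed.
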